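(* Let $L\subset\mathbb{R}$ be a real multiquadratic field of rank $t$, i.e. $L/\mathbb{Q}$ is Galois with $\mathrm{Gal}(L/\mathbb{Q})\cong(\mathbb{Z}/2\mathbb{Z})^t$, and let $\epsilon_1,\dots,\epsilon_{2^t-1}$ be the fundamental units of the $2^t-1$ quadratic subfields of $L$. Then the subspace of $\mathbb{F}_2^{2^t}$ spanned by the signatures (in $L$) of $-1,\epsilon_1,\dots,\epsilon_{2^t-1}$ has dimension at most $t+1$, and this maximum value $t+1$ is attained when every $\epsilon_i$ has norm $-1$.
   Context: For a totally real field $F$ of degree $n$ and $0\neq\alpha\in F$, the signature of $\alpha$ is the vector in $\mathbb{F}_2^n$ whose entry at a real embedding $v$ of $F$ is $0$ if $v(\alpha)>0$ and $1$ if $v(\alpha)<0$. *)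

(* Defs.v *)
From HB Require Import structures.
From mathcomp Require Import all_boot all_order all_algebra all_fingroup all_solvable all_field.
From mathcomp Require Import reals.
Set Implicit Arguments. Unset Strict Implicit. Unset Printing Implicit Defensive.
Import Order.TTheory GRing.Theory Num.Theory.
Local Open Scope ring_scope.

Definition integral_over_Z (L : fieldExtType rat) (x : L) : Prop :=
  exists p : {poly int}, p \is monic /\ root (map_poly intr p) x.

Definition unit_of_integers (L : fieldExtType rat) (K : {subfield L}) (u : L) : Prop :=
  [/\ u \in K, u != 0, integral_over_Z u & integral_over_Z u^-1].

Definition fundamental_unit (L : fieldExtType rat) (K : {subfield L}) (eps : L) : Prop :=
  unit_of_integers K eps /\
  forall u, unit_of_integers K u -> exists (b : bool) (k : int), u = (-1) ^+ b * eps ^ k.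

(* The real embeddings of a Galois field L, given one real embedding iota
   (L ⊂ R), are exactly iota \o sigma, sigma in Gal(L/Q). *)
Definition signature (L : splittingFieldType rat) (R : realType) (iota : {rmorphism L -> R})
  (a : L) : {ffun gal_of {:L} -> ('F_2)^o} :=
  [ffun s : gal_of {:L} => if iota (s a) < 0 then 1 else 0].

(* Main.v *)
Require Import Defs.
From HB Require Import structures.
From mathcomp Require Import all_boot all_order all_algebra all_fingroup all_solvable all_field.
From mathcomp Require Import reals.
From mathcomp Require Import ring lra.
Import Order.TTheory GRing.Theory Num.Theory.
Local Open Scope ring_scope.
Lemma Z2_cases (z : 'Z_2) : z = 0 \/ z = 1.
Proof. by case: z => [[|[|n]] H]; [left|right|]; try apply/val_inj. Qed.

Lemma F2_cases (z : 'F_2) : z = 0 \/ z = 1.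
Proof. by case: z => [[|[|n]] H]; [left|right|]; try apply/val_inj. Qed.

Section Hom.
Variables (gT : finGroupType) (t : nat) (D : {group gT}) (HD : D :=: [set: gT])
  (f : {morphism D >-> 'rV['Z_2]_t}) (injf : ('injm f)%g) (fD : (f @* D)%g = [set: 'rV['Z_2]_t]).

Definition hh j : {ffun gT -> ('F_2)^o} := [ffun x => if f x 0 j == 0 then 0 else 1].
Definition gg j := invm injf (delta_mx 0 j).

Lemma memD x : x \in D. Proof. by rewrite HD inE. Qed.
Lemma fM x y : f (x * y)%g = f x + f y. Proof. by rewrite morphM ?memD. Qed.
Lemma fgg j : f (gg j) = delta_mx 0 j. Proof. by rewrite invmK // fD inE. Qed.

Lemma hh_hom j x y : hh j (x * y)%g = hh j x + hh j y.
Proof.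
rewrite !ffunE fM mxE.
have Z11 : (1 + 1 : 'Z_2) = 0 by apply/val_inj.
have F11 : (1 + 1 : 'F_2) = 0 by apply/eqP.
case: (Z2_cases (f x 0 j)) => ->; case: (Z2_cases (f y 0 j)) => ->;
  by rewrite ?addr0 ?add0r ?eqxx ?oner_eq0 ?addr0 ?add0r ?Z11 ?eqxx ?F11.
Qed.

Lemma hh1 j : hh j 1%g = 0.
Proof. by rewrite ffunE morph1 mxE eqxx. Qed.

Lemma hh_gg j l : hh l (gg j) = if l == j then 1 else 0.
Proof. by rewrite ffunE fgg mxE eqxx /=; case: (l == j). Qed.

Lemma expand (chi : {ffun gT -> ('F_2)^o}) :
  (forall x y, chi (x * y)%g = chi x + chi y) -> chi = \sum_j chi (gg j) *: hh j.
Proof.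
move=> hom; apply/ffunP => x; rewrite sum_ffunE.
pose psi w := chi (invm injf w).
have psiD : forall w1 w2, psi (w1 + w2) = psi w1 + psi w2.
  move=> w1 w2; rewrite /psi -hom -morphM ?fD ?inE //.
have psi0 : psi 0 = 0.
  have H := psiD 0 0; rewrite addr0 in H.
  by apply: (addrI (psi 0)); rewrite addr0 -H.
have -> : chi x = psi (f x) by rewrite /psi invmE ?memD.
rewrite {1}(row_sum_delta (f x)) (big_morph psi psiD psi0).
apply: eq_bigr => j _; rewrite ffunE ffunE.
case: (Z2_cases (f x 0 j)) => ->.
  by rewrite scale0r psi0 eqxx scaler0.
by rewrite scale1r oner_eq0 /psi /gg; apply/esym/mulr1.
Qed.
End Hom.

Section X.
Variable T : finType.
Lemma fD (f g : {ffun T -> ('F_2)^o}) x : (f + g) x = f x + g x.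
Proof. by rewrite ffunE. Qed.
Lemma fZ (k : 'F_2) (f : {ffun T -> ('F_2)^o}) x : (k *: f) x = k * f x.
Proof. by rewrite ffunE. Qed.
Lemma fN (f : {ffun T -> ('F_2)^o}) x : (- f) x = - f x.
Proof. by rewrite ffunE. Qed.
Lemma f0 x : (0 : {ffun T -> ('F_2)^o}) x = 0.
Proof. by rewrite ffunE. Qed.
End X.

Section Quad.
Variable L : splittingFieldType rat.

Lemma quad_basis (K : {subfield L}) : \dim K = 2%N ->
  exists a, [/\ a \in K, a \notin 1%VS & (K = 1 + <[a]> :> {vspace L})%VS].
Proof.
move=> dK.
have : ~~ (K <= 1)%VS.
  by apply/negP => H; have := dimvS H; rewrite dimv1 dK.
case/subvPn => a aK a1; exists a; split => //.
have s1 : (1 + <[a]> <= K)%VS by rewrite subv_add sub1v -memvE.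
apply/eqP; rewrite eq_sym eqEdim s1 dK /=.
have H := dimv_leqif_eq (addvSl 1 <[a]>).
have := ltn_leqif H; rewrite dimv1 => ->.
apply/negP => /eqP E; move: a1; rewrite E.
by rewrite memvE addvSr.
Qed.

Lemma mem_quad (a : L) e : e \in (1 + <[a]>)%VS -> exists c k : rat, e = c *: 1 + k *: a.
Proof.
case/memv_addP => u u1 [v /vlineP[k ->] ->].
have /vlineP[c ->] : u \in <[1]>%VS by [].
by exists c, k.
Qed.

Lemma quad_root (a : L) (b c : rat) (f : 'AEnd(L)) :
  a * a = c *: 1 + b *: a -> f a = a \/ f a = b *: 1 - a.
Proof.
move=> Ha.
have fZ : forall (k : rat) x, f (k *: x) = k *: f x by move=> k x; rewrite linearZ.
have fD : forall x y, f (x + y) = f x + f y by move=> x y; rewrite linearD.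
have fM : forall x y, f (x * y) = f x * f y by move=> x y; rewrite rmorphM.
have f1 : f 1 = 1 by rewrite rmorph1.
have Hy : f a * f a = c *: 1 + b *: f a.
  by rewrite -fM Ha fD !fZ f1.
have : (f a - a) * (f a - (b *: 1 - a)) = 0.
  move: Ha Hy; rewrite -(mulr_algl b a) -(mulr_algl b (f a)) -[b *: 1]/(b%:A).
  move: (f a) (b%:A) (c%:A) => y B C Ha Hy.
  have -> : (y - a) * (y - (B - a)) = y * y - B * y - (a * a - B * a).
    by ring.
  by rewrite Ha Hy !addrK subrr.
by move/eqP; rewrite mulf_eq0 !subr_eq0 => /orP[/eqP|/eqP]; [left|right].
Qed.

Lemma galT (E : {subfield L}) : ('Gal(E / 1%AS))%g = [set: gal_of E].
Proof. by apply/setP => x; rewrite inE gal_kAut ?sub1v // kAut1E limg_gal subvv. Qed.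

Lemma AEndZ (f : 'AEnd(L)) (k : rat) x : f (k *: x) = k *: f x.
Proof. by rewrite linearZ. Qed.
Lemma AEndD (f : 'AEnd(L)) x y : f (x + y) = f x + f y.
Proof. by rewrite linearD. Qed.
Lemma AEndB (f : 'AEnd(L)) x y : f (x - y) = f x - f y.
Proof. by rewrite linearB. Qed.
Lemma AEnd1 (f : 'AEnd(L)) : f 1 = 1.
Proof. by rewrite rmorph1. Qed.

Variables (R : realType) (iota : {rmorphism L -> R}).
Hypothesis HGal : galois 1%AS {:L}.

Definition chiK (K : {subfield L}) : {ffun gal_of {:L} -> ('F_2)^o} :=
  [ffun s => if s \in ('Gal({:L} / K))%g then 0 else 1].

Lemma quad_data (K : {subfield L}) : \dim K = 2%N -> exists s0 : gal_of {:L},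
  [/\ chiK K s0 = 1,
      forall s t, chiK K (s * t)%g = chiK K s + chiK K t,
      forall e, e \in K -> signature iota e =
         (signature iota e 1%g) *: signature iota (-1) +
         (signature iota e s0 - signature iota e 1%g) *: chiK K &
      forall e, e \in K -> galNorm 1%AS K e = e * s0 e].
Proof.
move=> dK.
have [a [aK a1 KE]] := @quad_basis K dK.
have : a * a \in (1 + <[a]>)%VS by rewrite -KE rpredM.
case/mem_quad => c [b Hab].
have root := fun f => @quad_root a b c f Hab.
set a' := b *: 1 - a.
have a'K : a' \in K by rewrite rpredB ?rpredZ ?mem1v.
have a'a : a' != a.
  apply/eqP => H; move: a1; apply/negP; rewrite negbK.
  have -> : a = (b / 2) *: 1.
    have H2 : b *: 1 = a *+ 2 by rewrite mulr2n -{1}H subrK.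
    by rewrite mulrC -scalerA H2 -scaler_nat scalerA mulVf ?scale1r.
  by rewrite rpredZ ?mem1v.
have agree : forall f g : 'AEnd(L), f a = g a -> {in K, f =1 g}.
  move=> f g fg e; rewrite KE => /mem_quad[u [k ->]].
  by rewrite !AEndD !AEndZ !AEnd1 fg.
have stable : forall f : 'AEnd(L), {in K, forall e, f e \in K}.
  move=> f e; rewrite {1}KE => /mem_quad[u [k ->]].
  rewrite AEndD !AEndZ AEnd1 rpredD ?rpredZ ?mem1v //.
  by case: (root f) => ->.
have memGal : forall s : gal_of {:L}, (s \in ('Gal({:L} / K))%g) = (s a == a).
  move=> s; apply/idP/eqP => [H | H].
    by apply: (fixed_gal (subvf K) H aK).
  rewrite gal_kHom ?subvf //; apply/kAHomP => e eK.
  by rewrite (agree s (1%g : gal_of {:L})) ?gal_id.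
have chiE : forall s, chiK K s = if s a == a then 0 else 1.
  by move=> s; rewrite ffunE memGal.
have [s0 Hs0] : exists s0 : gal_of {:L}, s0 a != a.
  case: (pickP (fun s : gal_of {:L} => s a != a)) => [s0 Hs0|H]; first by exists s0.
  exfalso; move: a1; apply/negP; rewrite negbK.
  have <- : fixedField ('Gal({:L} / 1%AS))%g = 1%AS by apply/galois_fixedField.
  apply/fixedFieldP; first exact: memvf.
  by move=> x _; apply/eqP; move: (H x) => /= /negbFE.
have s0a : s0 a = a' by case: (root s0) => // E; rewrite E eqxx in Hs0.
exists s0; split.
- by rewrite chiE (negbTE Hs0).
- move=> s t; rewrite !chiE galM ?memvf //.
  case: (root s) => ->; first by rewrite eqxx add0r.
  rewrite (negbTE a'a) /a' AEndB AEndZ AEnd1 -/a'.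
  case: (root t) => ->.
    by rewrite (negbTE a'a) eqxx addr0.
  rewrite opprB addrC subrK eqxx -/a' (negbTE a'a).
  by apply/eqP.
- move=> e eK; apply/ffunP => s.
  have sigE : forall s t : gal_of {:L}, s e = t e ->
      signature iota e s = signature iota e t.
    by move=> s1 t1 E; rewrite !ffunE E.
  have sm1 : signature iota (-1) s = 1.
    by rewrite ffunE rmorphN1 rmorphN1 oppr_lt0 ltr01.
  rewrite fD !fZ sm1 chiE.
  have [sa|sa] := root s.
    rewrite sa eqxx mulr0 addr0 mulr1.
    by apply: sigE; apply: (agree s (1%g : gal_of {:L})); rewrite ?gal_id.
  rewrite sa (negbTE a'a) !mulr1 addrC subrK.
  by apply: sigE; apply: agree; rewrite // sa s0a.
- move=> e eK.
  have s0K : (s0 @: K <= K)%VS.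
    by apply/subvP => _ /memv_imgP[u uK ->]; apply: stable.
  set x0 := gal K s0.
  have x0E := galK s0K.
  have x0a : x0 a = a' by rewrite x0E.
  have xcase : forall x : gal_of K, x = 1%g \/ x = x0.
    move=> x; case: (root x) => xa; [left|right]; apply/eqP/gal_eqP.
      by apply: agree; rewrite xa gal_id.
    by apply: agree; rewrite xa x0a.
  have x01 : x0 != 1%g.
    by apply/eqP => E; move: x0a; rewrite E gal_id => /esym/eqP; rewrite (negbTE a'a).
  rewrite /galNorm galT (bigD1 1%g) ?inE // (bigD1 x0) ?inE ?x01 //= big1 ?mulr1.
    by rewrite gal_id x0E.
  move=> x /andP[/andP[_ H1] H2].
  by case: (xcase x) => E; rewrite E eqxx ?andbF in H1 H2.
Qed.

Lemma sig_m1 (s : gal_of {:L}) : signature iota (-1) s = 1.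
Proof. by rewrite ffunE rmorphN1 rmorphN1 oppr_lt0 ltr01. Qed.

End Quad.

Theorem proposition6p2 (L : splittingFieldType rat) (R : realType)
  (iota : {rmorphism L -> R}) (t : nat)
  (HGal : galois 1%AS {:L})
  (Hrank : ('Gal({:L} / 1%AS) \isog [set: 'rV['Z_2]_t])%g)
  (Ks : 'I_(2 ^ t - 1) -> {subfield L}) (eps : 'I_(2 ^ t - 1) -> L)
  (HKinj : injective Ks)
  (HKquad : forall i, \dim (Ks i) = 2%N)
  (Heps : forall i, fundamental_unit (Ks i) (eps i)) :
  let V := <<signature iota (-1) :: [seq signature iota (eps i) | i : 'I_(2 ^ t - 1)]>>%VS in
  (\dim V <= t.+1)%N /\
  ((forall i, galNorm 1%AS (Ks i) (eps i) = -1) -> \dim V = t.+1).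
Proof.
move=> V.
have [f injf fG] := isogP Hrank.
have HD : ('Gal({:L} / 1%AS))%g = [set: gal_of {:L}] by apply: galT.
set h := @hh _ _ _ f.
set g := @gg _ _ _ f injf.
set s := signature iota (-1).
set chi := fun i => @chiK L (Ks i).
have qd := fun i => @quad_data L R iota HGal (Ks i) (HKquad i).
have epsK : forall i, eps i \in Ks i by move=> i; case: (Heps i) => [[]].
have chiE : forall i, chi i = \sum_j chi i (g j) *: h j.
  move=> i; have [s0 [_ hom _ _]] := qd i.
  exact: (@expand _ _ _ HD f injf fG (chi i) hom).
have VW : (V <= <<s :: [seq h j | j : 'I_t]>>)%VS.
  apply/span_subvP => w; rewrite inE => /orP[/eqP-> | /imageP[i _ ->]].
    by rewrite memv_span ?mem_head.
  have [s0 [_ hom sig _]] := qd i.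
  rewrite (sig _ (epsK i)); apply: rpredD; apply: rpredZ.
    by rewrite memv_span ?mem_head.
  rewrite -/(chi i) (chiE i); apply: memv_suml => j _; apply: rpredZ.
  by rewrite memv_span // inE image_f ?orbT.
have dimW : (\dim <<s :: [seq h j | j : 'I_t]>> <= t.+1)%N.
  by apply: leq_trans (dim_span _) _; rewrite /= size_image card_ord.
split; first exact: leq_trans (dimvS VW) dimW.
move=> Hnorm.
apply/eqP; rewrite eqn_leq (leq_trans (dimvS VW) dimW) /=.
have sV : s \in V by rewrite memv_span ?mem_head.
have sigV : forall i, signature iota (eps i) \in V.
  by move=> i; rewrite memv_span // inE image_f ?orbT.
have chiV : forall i, chi i \in V.
  move=> i; have [s0 [c1 hom sig nrm]] := qd i.
  have d1 : signature iota (eps i) s0 - signature iota (eps i) 1%g = 1.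
    have N := nrm _ (epsK i); rewrite Hnorm in N.
    have P : iota (eps i) * iota (s0 (eps i)) = -1 by rewrite -rmorphM -N rmorphN1.
    rewrite !ffunE gal_id.
    case: (boolP (iota (eps i) < 0)) => H1; case: (boolP (iota (s0 (eps i)) < 0)) => H2.
    - exfalso; have : 0 < iota (eps i) * iota (s0 (eps i)).
        by rewrite -mulrNN mulr_gt0 // oppr_gt0.
      by rewrite P oppr_gt0 ltr10.
    - by apply/eqP.
    - by rewrite subr0.
    - exfalso; rewrite -leNgt in H1; rewrite -leNgt in H2.
      by have := mulr_ge0 H1 H2; rewrite P oppr_ge0 ler10.
  have E := sig _ (epsK i); rewrite d1 scale1r in E.
  have -> : chi i = signature iota (eps i) - signature iota (eps i) 1%g *: s.
    by set c := signature iota (eps i) 1%g in E *; rewrite E (addrC (c *: _)) addrK.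
  by apply: rpredB; [apply: sigV | apply: rpredZ].
have gfix : forall K : {subfield L}, fixedField ('Gal({:L} / K))%g = K.
  move=> K; apply/galois_fixedField; apply: galoisS HGal.
  by rewrite sub1v subvf.
have chi_inj : injective chi.
  move=> i j E; apply: HKinj.
  have HG : ('Gal({:L} / Ks i))%g = ('Gal({:L} / Ks j))%g.
    move/ffunP: E => E; apply/setP => x; have := E x; rewrite /chi /chiK !ffunE.
    by case: (x \in _); case: (x \in _) => // /eqP.
  by apply/val_inj => /=; rewrite -(gfix (Ks i)) HG gfix.
pose Img := [set chi i | i : 'I_(2 ^ t - 1)].
pose S := [set (\sum_j k 0 j *: h j) | k : 'rV['F_2]_t in [set k : 'rV['F_2]_t | k != 0]].
have cImg : #|Img| = (2 ^ t - 1)%N by rewrite card_imset ?card_ord.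
have cS : (#|S| <= 2 ^ t - 1)%N.
  apply: leq_trans (leq_imset_card _ _) _.
  have -> : #|[set k : 'rV['F_2]_t | k != 0]| = #|[set~ (0 : 'rV['F_2]_t)]|.
    by apply: eq_card => k; rewrite !inE.
  by rewrite cardsC1 card_mx card_Fp // mul1n subn1.
have ImgS : Img \subset S.
  apply/subsetP => _ /imsetP[i _ ->]; apply/imsetP.
  exists (\row_j chi i (g j)).
    rewrite inE; apply/eqP => k0.
    have [s0 [c1 _ _ _]] := qd i.
    move: c1; rewrite -/(chi i) (chiE i) sum_ffunE big1 => [|j _].
      by move/eqP.
    move/rowP: k0 => k0; have := k0 j; rewrite !mxE => ->.
    by rewrite fZ mul0r.
  by rewrite {1}(chiE i); apply: eq_bigr => j _; rewrite mxE.
have ImgE : Img = S by apply/eqP; rewrite eqEcard ImgS cImg.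
have hV : forall j, h j \in V.
  move=> j; have : h j \in S.
    apply/imsetP; exists (delta_mx 0 j).
      rewrite inE; apply/eqP => /rowP H; have := H j.
      by rewrite !mxE !eqxx /= => /eqP.
    rewrite (bigD1 j) //= big1 ?addr0 ?mxE ?eqxx ?scale1r // => l Hl.
    by rewrite mxE (negbTE Hl) andbF scale0r.
  by rewrite -ImgE => /imsetP[i _ ->]; apply: chiV.
pose A (p : 'F_2 * 'rV['F_2]_t) : {ffun gal_of {:L} -> ('F_2)^o} :=
  p.1 *: s + \sum_j p.2 0 j *: h j.
have AV : [set A p | p in [set: 'F_2 * 'rV['F_2]_t]] \subset V.
  apply/subsetP => _ /imsetP[p _ ->]; apply: rpredD; first exact: rpredZ.
  by apply: memv_suml => j _; apply: rpredZ.
have Aev : forall p x, A p x = p.1 * s x + \sum_j p.2 0 j * h j x.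
  by move=> p x; rewrite fD fZ sum_ffunE; congr (_ + _); apply: eq_bigr => j _; rewrite fZ.
have Ainj : injective A.
  move=> [c k] [c' k'] E.
  move/ffunP: E => Ex.
  have E1 := Ex 1%g; rewrite !Aev /= !sig_m1 !mulr1 in E1.
  rewrite big1 ?addr0 in E1; last by move=> j _; rewrite hh1 mulr0.
  rewrite big1 ?addr0 in E1; last by move=> j _; rewrite hh1 mulr0.
  subst c'; congr (_, _); apply/rowP => j.
  have Ej := Ex (g j); rewrite !Aev /= !sig_m1 !mulr1 in Ej.
  have sj : forall kk : 'rV['F_2]_t, \sum_l kk 0 l * h l (g j) = kk 0 j.
    have hg : forall l, h l (g j) = (l == j)%:R.
      by move=> l; rewrite /h hh_gg; case: (l == j).
    move=> kk; rewrite (bigD1 j) //= big1 ?addr0.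
      by rewrite hg eqxx mulr1.
    by move=> l Hl; rewrite hg (negbTE Hl) mulr0.
  rewrite !sj in Ej.
  by apply: (addrI c).
have : (2 ^ t.+1 <= 2 ^ \dim V)%N.
  rewrite -{2}(card_Fp (p := 2)) // -card_vspace.
  apply: leq_trans (subset_leq_card AV).
  by rewrite card_imset // cardsT card_prod card_mx card_Fp // mul1n expnS.
by rewrite leq_exp2l.
Qed.

Print Assumptions proposition6p2.
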